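(* Let $n\ge 2$, $f\in\mathfrak{F}_{sc}$, and let $\rho$ be a density matrix on $\mathbb{C}^n$ whose diagonal entries $\rho_{11},\dots,\rho_{nn}$ are all strictly positive. Let $CM(\rho)=\Delta(\rho)^{-1/2}\rho\,\Delta(\rho)^{-1/2}$. If $CM(\rho)$ is a convex combination of rank-one correlation matrices, then there exists a pure state decomposition $\mathfrak{D}$ of $\rho$ with $\bar C_f(\mathfrak{D})=f(\rho_{11},\rho_{22},\dots,\rho_{nn})$.
   Context: Fix the reference orthonormal basis $\{|i\rangle\}_{i=1}^n$ of $\mathbb{C}^n$. Let $\Omega$ be the probability simplex in $\mathbb{R}^n$. $\mathfrak{F}_{sc}$ denotes the set of functions $f:\Omega\to\mathbb{R}$ such that (i) $f((1,0,\dots,0)^T)=0$; (ii) $f(P\mathbf{x})=f(\mathbf{x})$ for every permutation matrix $P$; (iii) $f$ is concave. For a unit vector $|\psi\rangle=\sum_i\psi_i|i\rangle$, $C_f(|\psi\rangle)=f(|\psi_1|^2,\dots,|\psi_n|^2)$. A pure state decomposition of $\rho$ is a finite family $\{p_k,|\psi_k\rangle\}$ with $p_k>0$, $\sum_kp_k=1$, unit vectors $|\psi_k\rangle$ and $\rho=\sum_kp_k|\psi_k\rangle\langle\psi_k|$; its average coherence is $\bar C_f(\mathfrak{D})=\sum_kp_kC_f(|\psi_k\rangle)$. $\Delta(X)$ is the diagonal matrix with the same diagonal entries as $X$ in the reference basis. A correlation matrix is a positive semidefinite matrix all of whose diagonal entries equal $1$. *)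

(* Defs.v *)
From HB Require Import structures.
From mathcomp Require Import all_boot all_order all_algebra all_fingroup.
From mathcomp Require Import complex.
Set Implicit Arguments.
Unset Strict Implicit.
Unset Printing Implicit Defensive.
Import Order.TTheory GRing.Theory Num.Theory.
Local Open Scope ring_scope.
Local Open Scope complex_scope.

Section Defs.
Variable R : rcfType.
Local Notation C := R[i].
Variable n : nat.

Definition mxdag (m k : nat) (A : 'M[C]_(m, k)) : 'M[C]_(k, m) :=
  (map_mx (@conjc R) A)^T.

Definition hermitian (A : 'M[C]_n) : Prop := mxdag A = A.

Definition psd (A : 'M[C]_n) : Prop :=
  hermitian A /\ forall v : 'cV[C]_n, 0 <= (mxdag v *m A *m v) 0 0.

Definition density_matrix (A : 'M[C]_n) : Prop := psd A /\ \tr A = 1.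

Definition correlation_matrix (A : 'M[C]_n) : Prop :=
  psd A /\ forall i, A i i = 1.

Definition Delta (X : 'M[C]_n) : 'M[C]_n := diag_mx (\row_i X i i).

Definition Delta_inv_sqrt (X : 'M[C]_n) : 'M[C]_n :=
  diag_mx (\row_i (sqrtC (X i i))^-1).

Definition CM (rho : 'M[C]_n) : 'M[C]_n :=
  Delta_inv_sqrt rho *m rho *m Delta_inv_sqrt rho.

Definition convex_comb_rank1_corr (M : 'M[C]_n) : Prop :=
  exists (k : nat) (w : 'I_k -> R) (Ms : 'I_k -> 'M[C]_n),
    [/\ forall j, 0 <= w j,
        \sum_j w j = 1,
        forall j, correlation_matrix (Ms j) /\ \rank (Ms j) = 1%N
      & M = \sum_j (w j)%:C *: Ms j].

Definition in_simplex (x : 'rV[R]_n) : Prop :=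
  (forall i, 0 <= x 0 i) /\ \sum_i x 0 i = 1.

(* the class F_sc; f is only constrained on the simplex *)
Definition F_sc (f : 'rV[R]_n -> R) : Prop :=
  [/\ (forall i : 'I_n, val i = 0%N -> f (\row_j (j == i)%:R) = 0),
      (forall (s : 'S_n) x, in_simplex x -> f (col_perm s x) = f x)
    & (forall x y (t : R), in_simplex x -> in_simplex y -> 0 <= t <= 1 ->
         t * f x + (1 - t) * f y <= f (t *: x + (1 - t) *: y))].

Definition unit_vector (v : 'cV[C]_n) : Prop := \sum_i `|v i 0| ^+ 2 = 1.

Definition populations (v : 'cV[C]_n) : 'rV[R]_n :=
  \row_i complex.Re (`|v i 0| ^+ 2).

Definition Cf (f : 'rV[R]_n -> R) (v : 'cV[C]_n) : R := f (populations v).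

Definition pure_state_decomp (rho : 'M[C]_n) (k : nat)
  (p : 'I_k -> R) (psi : 'I_k -> 'cV[C]_n) : Prop :=
  [/\ forall j, 0 < p j,
      \sum_j p j = 1,
      forall j, unit_vector (psi j)
    & rho = \sum_j (p j)%:C *: (psi j *m mxdag (psi j))].

Definition avg_coherence (f : 'rV[R]_n -> R) (k : nat)
  (p : 'I_k -> R) (psi : 'I_k -> 'cV[C]_n) : R :=
  \sum_j p j * Cf f (psi j).

Definition diag_real (rho : 'M[C]_n) : 'rV[R]_n := \row_i complex.Re (rho i i).

End Defs.

(* Main.v *)
Require Import Defs.
From HB Require Import structures.
From mathcomp Require Import all_boot all_order all_algebra all_fingroup.
From mathcomp Require Import complex.
From mathcomp.algebra_tactics Require Import ring.
Import Order.TTheory GRing.Theory Num.Theory.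
Local Open Scope ring_scope.
Lemma rank1_minor (F : fieldType) (n : nat) (M : 'M[F]_n) :
  \rank M = 1%N -> forall i j k l, M i j * M k l = M i l * M k j.
Proof.
move=> hr; case: n M hr => [|n] M hr; first by case.
have P0 : forall a b : 'I_n.+1, (pid_mx 1 : 'M[F]_n.+1) a b = ((a == ord0) && (b == ord0))%:R.
  move=> a b; rewrite /pid_mx mxE; case: a b => [[|a] ha] [[|b] hb] //=; by rewrite andbF.
have E : forall x y, M x y = (col_ebase M) x ord0 * (row_ebase M) ord0 y.
  move=> x y; rewrite -{1}(mulmx_ebase M) hr.
  rewrite !mxE (bigD1 ord0) //= big1 ?addr0.
    rewrite !mxE (bigD1 ord0) //= big1 ?addr0; first by rewrite P0 eqxx mulr1.
    by move=> t /negbTE ht; rewrite P0 ht mulr0.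
  move=> t /negbTE ht; rewrite !mxE big1 ?mul0r // => s _.
  by rewrite P0 ht andbF mulr0.
move=> i j k l; rewrite !E; ring.
Qed.

Lemma filter_sum (V : zmodType) (k : nat) (F : 'I_k -> V)
  (P : pred 'I_k) :
  (forall l, ~~ P l -> F l = 0) ->
  \sum_(i < #|P|) F (enum_val i) = \sum_l F l.
Proof.
move=> h; rewrite -big_enum_val /= [RHS](bigID P) /= [X in _ = _ + X]big1 ?addr0 //.
Qed.

Theorem theorem2 (R : rcfType) (n : nat) (hn : (2 <= n)%N)
  (f : 'rV[R]_n -> R) (hf : F_sc f)
  (rho : 'M[R[i]]_n) (hrho : density_matrix rho)
  (hdiag : forall i, 0 < rho i i)
  (hCM : convex_comb_rank1_corr (CM rho)) :
  exists (k : nat) (p : 'I_k -> R) (psi : 'I_k -> 'cV[R[i]]_n),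
    pure_state_decomp rho p psi /\
    avg_coherence f p psi = f (diag_real rho).
Proof.
case: hCM => k [w [Ms [w0 w1 hMs hsum]]].
have n0 : (0 < n)%N by apply: ltnW.
pose i0 : 'I_n := Ordinal n0.
pose s i := sqrtC (rho i i).
have s_gt0 : forall i, 0 < s i by move=> i; rewrite sqrtC_gt0.
have s_conj : forall i, (s i)^* = s i by move=> i; apply: geC0_conj; apply: ltW.
have s_sq : forall i, s i * s i = rho i i by move=> i; rewrite -expr2 sqrtCK.
pose u l i := Ms l i i0.
have key : forall l i j, Ms l i j = u l i * (u l j)^*.
  move=> l i j; case: (hMs l) => [[[herm _] d1] r1].
  have -> : (u l j)^* = Ms l i0 j.
    by rewrite -[in RHS]herm /mxdag !mxE.
  by rewrite /u -(@rank1_minor _ _ _ r1 i j i0 i0) d1 mulr1.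
have u_norm : forall l i, `|u l i| ^+ 2 = 1.
  by move=> l i; rewrite normCK -key; case: (hMs l) => [[_ d1] _].
have CMe : forall i j, CM rho i j = (s i)^-1 * rho i j * (s j)^-1.
  by move=> i j; rewrite /CM /Delta_inv_sqrt mul_mx_diag mul_diag_mx !mxE.
have rhoe : forall i j, rho i j = s i * s j * \sum_l real_complex R (w l) * (u l i * (u l j)^*).
  move=> i j; have := congr1 (fun M : 'M[R[i]]_n => M i j) hsum; rewrite /= CMe summxE.
  move=> h.
  rewrite (eq_bigr (fun l => real_complex R (w l) * Ms l i j)) in h; last by move=> l _; rewrite mxE.
  under eq_bigr do rewrite -key.
  rewrite -h; have := s_gt0 i; have := s_gt0 j.
  rewrite !lt0r => /andP[sj _] /andP[si _]; field.
  by rewrite sj si.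
pose psi l : 'cV[R[i]]_n := \col_i (s i * u l i).
have psi_norm : forall l i, `|psi l i 0| ^+ 2 = rho i i.
  move=> l i; rewrite mxE normrM exprMn u_norm mulr1 ger0_norm ?expr2 ?s_sq //.
  exact: ltW.
pose P := [pred l | 0 < w l].
have wz : forall l, ~~ P l -> w l = 0.
  by move=> l; rewrite inE /= lt_def negb_and negbK (w0 l) orbF => /eqP.
exists #|P|, (fun i => w (enum_val i)), (fun i => psi (enum_val i)).
have pops : forall l, populations (psi l) = diag_real rho.
  by move=> l; apply/rowP => i; rewrite [LHS]mxE psi_norm mxE.
split; last first.
  rewrite /avg_coherence /Cf.
  under eq_bigr do rewrite pops.
  rewrite -mulr_suml (@filter_sum _ _ (fun l => w l)) ?w1 ?mul1r //.
split.
- by move=> i; have := enum_valP i; rewrite inE.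
- by rewrite (@filter_sum _ _ (fun l => w l)).
- move=> i; rewrite /unit_vector; under eq_bigr do rewrite psi_norm.
  by case: hrho => _ <-.
- rewrite (@filter_sum _ _ (fun l => real_complex R (w l) *: (psi l *m mxdag (psi l)))).
    apply/matrixP => i j; rewrite summxE rhoe mulr_sumr; apply: eq_bigr => l _.
    rewrite !mxE big_ord1 !mxE.
    have cc : forall z : R[i], (z^*)%C = z^* by [].
    rewrite cc rmorphM /= s_conj; ring.
  by move=> l /wz ->; rewrite scale0r.
Qed.
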